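(* Let $g\in\mathcal{PSD}$ with $\{T^k(x):x\in X^{\rm in},k\in\mathbb N\}\subseteq\operatorname{dom}(g)$. Then $g$ is $(X^{\rm in},T,\varphi)$-compatible if and only if there exists an $(X^{\rm in},T,\varphi)$-certificate of compatibility for $g$.
   Context: Standing data: nonempty $X^{\rm in}\subseteq\mathbb R^d$, $T:\mathbb R^d\to\mathbb R^d$, $\varphi:\mathbb R^d\to\mathbb R$ with $\varphi(0)=0$, $\nu_k=\sup_{x\in X^{\rm in}}\varphi(T^k(x))$ assumed finite for all $k$; $G^{>}_\nu=\{k:\nu_k>\limsup_n\nu_n\}$. $\mathcal{PSD}$: functions $P:\mathbb R^d\to[0,+\infty]$ taking some value in $(0,+\infty)$; $\operatorname{dom}(g)=\{x:g(x)<+\infty\}$. $I^\varphi=\overline{\operatorname{conv}}\{\varphi(T^k(x)):k\in\mathbb N,x\in X^{\rm in}\}$ (closed convex hull in $\mathbb R$). $\mathrm{SC}$ is the set of $\alpha:\mathbb R\to\mathbb R$ for which there is an interval $I$ with $\alpha(I)=[0,1]$ and $\alpha$ strictly increasing and continuous on $\operatorname{conv}(I^\varphi\cup I)$. An $(X^{\rm in},T,\varphi)$-certificate of compatibility for $g$ is $\alpha\in\mathrm{SC}$ such that $\alpha(\nu_k)>0$ for some $k\in G^{>}_\nu$ and $\alpha(\varphi(T^k(x)))\le g(T^k(x))$ for all $k\in\mathbb N$, $x\in X^{\rm in}$. $g$ is $(X^{\rm in},T,\varphi)$-compatible at $k\in G^{>}_\nu$ if there exist $\varepsilon>0,\eta>0$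 such that for all $x\in X^{\rm in}$, $j\in\mathbb N$ with $\varphi(T^j(x))>\nu_k-\eta$ one has $g(T^j(x))>\varepsilon$; $g$ is $(X^{\rm in},T,\varphi)$-compatible if it is so at some $k\in G^{>}_\nu$. *)

(* Defs.v *)
From HB Require Import structures.
From mathcomp Require Import all_boot all_order all_algebra.
From mathcomp Require Import all_classical all_reals all_analysis.
Set Implicit Arguments. Unset Strict Implicit. Unset Printing Implicit Defensive.
Import Order.TTheory GRing.Theory Num.Theory.
Import numFieldNormedType.Exports.
Local Open Scope classical_set_scope.
Local Open Scope ring_scope.

Section Defs.
Variables (R : realType) (d : nat).
Variables (Xin : set 'rV[R]_d) (T : 'rV[R]_d -> 'rV[R]_d) (phi : 'rV[R]_d -> R).

Definition nu (k : nat) : R := sup [set phi (iter k T x) | x in Xin].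

Definition nu_finite : Prop := forall k, has_ubound [set phi (iter k T x) | x in Xin].

Definition Ggt : set nat :=
  [set k | (limn_esup (fun n => (nu n)%:E) < (nu k)%:E)%E].

Definition PSD (g : 'rV[R]_d -> \bar R) : Prop :=
  (forall x, (0 <= g x)%E) /\ exists x, (0 < g x)%E /\ (g x < +oo)%E.

Definition orbit_vals : set R := [set phi (iter k T x) | k in setT & x in Xin].

Definition convR (A : set R) : set R :=
  \bigcap_(C in [set C : set R | A `<=` C /\ is_interval C]) C.

Definition cl_convR (A : set R) : set R :=
  \bigcap_(C in [set C : set R | A `<=` C /\ is_interval C /\ closed C]) C.

Definition Iphi : set R := cl_convR orbit_vals.

Definition SC (alpha : R -> R) : Prop :=
  exists I : set R, is_interval I /\ alpha @` I = `[0, 1]%classic /\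
    let S := convR (Iphi `|` I) in
    (forall x y, S x -> S y -> x < y -> alpha x < alpha y) /\
    {within S, continuous alpha}.

Definition certificate (g : 'rV[R]_d -> \bar R) (alpha : R -> R) : Prop :=
  SC alpha /\ (exists2 k, Ggt k & 0 < alpha (nu k)) /\
  forall k x, Xin x -> ((alpha (phi (iter k T x)))%:E <= g (iter k T x))%E.

Definition compatible_at (g : 'rV[R]_d -> \bar R) (k : nat) : Prop :=
  Ggt k /\ exists eps eta : R, 0 < eps /\ 0 < eta /\
    forall x j, Xin x -> nu k - eta < phi (iter j T x) ->
      (eps%:E < g (iter j T x))%E.

Definition compatible (g : 'rV[R]_d -> \bar R) : Prop :=
  exists k, compatible_at g k.
End Defs.

(* Main.v *)
Require Import Defs.
From HB Require Import structures.
From mathcomp Require Import all_boot all_order all_algebra.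
From mathcomp Require Import all_classical all_reals all_analysis.
From mathcomp Require Import lra.
Import Order.TTheory GRing.Theory Num.Theory.
Import numFieldNormedType.Exports.
Local Open Scope classical_set_scope.
Local Open Scope ring_scope.

Section Helpers.
Variables (R : realType) (d : nat).
Variables (Xin : set 'rV[R]_d) (T : 'rV[R]_d -> 'rV[R]_d) (phi : 'rV[R]_d -> R).

Lemma phi_le_nu (Hf : nu_finite Xin T phi) k x :
  Xin x -> phi (iter k T x) <= nu Xin T phi k.
Proof. by move=> Xx; apply: ub_le_sup; [exact: Hf | exists x]. Qed.

Lemma Ggt_bound k : Ggt Xin T phi k ->
  exists M, nu Xin T phi k <= M /\ forall n, nu Xin T phi n <= M.
Proof.
rewrite /Ggt /= limn_esup_lim.
have := @cvg_esups_inf R (fun n => (nu Xin T phi n)%:E).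
move=> /cvg_lim -> //.
move=> /ereal_inf_lt [_ [N _ <-]] HN.
have H1 : forall n, (N <= n)%N -> nu Xin T phi n <= nu Xin T phi k.
  move=> n Nn; rewrite -lee_fin; apply: le_trans (ltW HN).
  by apply: ereal_sup_ubound; exists n.
suff [M [HkM HM]] : exists M, nu Xin T phi k <= M /\
    forall n, (n < N)%N -> nu Xin T phi n <= M.
  exists M; split => // n; case: (ltnP n N) => nN; first exact: HM.
  exact: le_trans (H1 _ nN) HkM.
elim: N {HN H1} => [|N [M [HkM HM]]]; first by exists (nu Xin T phi k).
exists (Num.max M (nu Xin T phi N)); split.
  by rewrite le_max HkM.
move=> n; rewrite ltnS leq_eqVlt => /orP [/eqP -> | nN].
  by rewrite le_max lexx orbT.
by rewrite le_max HM.
Qed.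

Lemma Iphi_sub_S I : Iphi Xin T phi `<=` convR (Iphi Xin T phi `|` I).
Proof. by move=> y Iy C [HC _]; apply: HC; left. Qed.

Lemma orbit_sub_Iphi : orbit_vals Xin T phi `<=` Iphi Xin T phi.
Proof. by move=> y Oy C [HC _]; exact: HC. Qed.

Lemma nu_in_Iphi (Hne : Xin !=set0) (Hf : nu_finite Xin T phi) k :
  Iphi Xin T phi (nu Xin T phi k).
Proof.
move=> C [HC [_ cC]]; move/closure_id: cC => ->.
apply: (closureS _ (closure_sup _ _)); last exact: Hf.
- by move=> _ [x Xx <-]; apply: HC; exists k => //; exists x.
- by case: Hne => x Xx; exists (phi (iter k T x)); exists x.
Qed.

End Helpers.

Theorem mainTheorem17 (R : realType) (d : nat)
  (Xin : set 'rV[R]_d) (T : 'rV[R]_d -> 'rV[R]_d) (phi : 'rV[R]_d -> R)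
  (g : 'rV[R]_d -> \bar R) :
  Xin !=set0 -> phi 0 = 0 -> nu_finite Xin T phi ->
  PSD g ->
  (forall k x, Xin x -> (g (iter k T x) < +oo)%E) ->
  compatible Xin T phi g <-> exists alpha, certificate Xin T phi g alpha.
Proof.
move=> Hne phi0 Hf [g0 _] Hfin; split; last first.
  case=> alpha [[I [Iint [Iimg HS]]] [[k Gk Hak] Hb]].
  move: HS => /= [Hmono Hcont].
  set S := convR (Iphi Xin T phi `|` I) in Hmono Hcont.
  have nuS : S (nu Xin T phi k) by apply: Iphi_sub_S; exact: nu_in_Iphi.
  have oS : forall j x, Xin x -> S (phi (iter j T x)).
    by move=> j x Xx; apply: Iphi_sub_S; apply: orbit_sub_Iphi; exists j => //; exists x.
  have Hc := proj1 (subspace_continuousP _ _) Hcont _ nuS.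
  have h2 : alpha (nu Xin T phi k) / 2 < alpha (nu Xin T phi k).
    by rewrite ltr_pdivrMr // ltr_pMr // ltr1n.
  have := @cvgr_gt _ _ _ (within_filter _ _) _ _ Hc _ h2.
  move=> /(_ (nbhs_filter _)); rewrite /within /= => /(proj1 (nbhs_ballP _ _)) [e /= e0 He].
  exists k; split => //; exists (alpha (nu Xin T phi k) / 2), e.
  split; first by rewrite divr_gt0.
  split => // x j Xx Hy.
  apply: (lt_le_trans _ (Hb j x Xx)); rewrite lte_fin.
  case: (leP (nu Xin T phi k) (phi (iter j T x))) => Hk.
    apply: (lt_le_trans (y := alpha (nu Xin T phi k))).
      by rewrite ltr_pdivrMr // ltr_pMr // ltr1n.
    move: Hk; rewrite le_eqVlt => /orP [/eqP -> //| Hk].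
    by apply/ltW/Hmono => //; exact: oS.
  apply: (He _ _ (oS _ _ Xx)).
  rewrite /ball /= ger0_norm ?subr_ge0 ?ltW //.
  by rewrite ltrBlDr -ltrBlDl.
case=> k [Gk [eps [eta [e0 [eta0 He]]]]].
have [M [HkM HM]] := @Ggt_bound R d Xin T phi k Gk.
set a := nu Xin T phi k - eta.
have Ma : 0 < M - a by rewrite /a; lra.
set c := (M - a) / eps.
have c0 : 0 < c by rewrite /c divr_gt0.
have cn0 : c != 0 by rewrite gt_eqF.
exists (fun y => (y - a) / c).
split.
- exists `[a, a + c]%classic; split; first exact: interval_is_interval.
  split.
    apply/seteqP; split.
      move=> _ [y /= Hy <-]; rewrite /= in_itv /= in Hy *.
      case/andP: Hy => h1 h2; apply/andP; split; rewrite ?bnd_simp.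
        by apply: divr_ge0; lra.
      by rewrite ler_pdivrMr // mul1r lerBlDl.
    move=> z Hz; exists (a + z * c).
      rewrite /= in_itv /= in Hz *; case/andP: Hz => h1 h2; apply/andP; split; rewrite ?bnd_simp.
        by rewrite lerDl; nra.
      by rewrite lerD2l; nra.
    by rewrite /= addrAC subrr add0r mulfK.
  split.
    by move=> x y _ _ xy; rewrite ltr_pM2r ?invr_gt0 // ltrD2r.
  apply: (@continuous_subspaceT _ _ _ (fun y => (y - a) / c)) => x.
  exact: (cvgM (cvgB cvg_id (cvg_cst a)) (cvg_cst c^-1)).
- split.
    by exists k => //; rewrite divr_gt0 // /a; lra.
  move=> j x Xx.
  have hy : phi (iter j T x) <= M := le_trans (@phi_le_nu R d Xin T phi Hf j x Xx) (HM j).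
  case: (ltP a (phi (iter j T x))) => h.
    apply: le_trans (ltW (He x j Xx h)); rewrite lee_fin.
    by rewrite ler_pdivrMr // /c mulrC divfK ?gt_eqF // lerD2r.
  apply: le_trans (g0 _); rewrite lee_fin.
  by rewrite ler_pdivrMr // mul0r subr_le0.
Qed.
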